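(* Let $n\ge 1$, $m\ge 2$, $0\le k\le n-1$ with $(m,k)\ne(2,0)$. Then the class $\mathcal{C}^k_{ac}$ of all complete $k$-bounded acyclic CP-nets over $n$ variables of domain size $m$, over the instance space $\mathcal{X}_{swap}$, is not maximal; in particular, it is not maximum.
   Context: Variables $V=\{v_1,\dots,v_n\}$, each with a finite domain of size $m$. An outcome assigns a value to every variable; $\mathcal{O}_X$ denotes assignments to $X\subseteq V$. A complete CP-net specifies for each $v_i$ a parent set $Pa(v_i)\subseteq V\setminus\{v_i\}$ and, for each context $\gamma\in\mathcal{O}_{Pa(v_i)}$, a strict total order $\succ^{v_i}_\gamma$ on $D_{v_i}$; parents are non-dummy. Acyclic: graph with edges $(v_j,v_i)$, $v_j\in Pa(v_i)$, acyclic; $k$-bounded: all $|Pa(v_i)|\le k$. Improving flip: changing only $v_i$ to a value preferred under $\succ^{v_i}_{o[Pa(v_i)]}$; $o'\succ o$ iff a nonempty sequence of improving flips leads from $o$ to $o'$. A swap is an ordered pair $x=(x.1,x.2)$ of outcomes differing in exactly one variable; $\mathcal{X}_{swap}$ contains exactly one ordering of each such pair (fixed arbitrarily); a CP-net $N$ is the concept $c_N(x)=1$ iff $x.1\succ x.2$. For a finite class $\mathcal{C}$ over instance space $\mathcal{X}$ with VC dimension $d$: $\mathcal{C}$ is maximum if $|\mathcal{C}|=\sum_{i=0}^d\binom{|\mathcal{X}|}{i}$; $\mathcal{C}$ is maximal if adding any concept over $\mathcal{X}$ not in $\mathcal{C}$ increases the VC dimension. *)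

(* Defs.v *)
From mathcomp Require Import all_boot fingroup perm.
Set Implicit Arguments. Unset Strict Implicit. Unset Printing Implicit Defensive.

Section VC.
Variable X : finType.

Definition shattered (C : {set {ffun X -> bool}}) (S : {set X}) : bool :=
  [forall B : {set X}, (B \subset S) ==>
     [exists c in C, [set x in S | c x] == B]].

Definition vcdim (C : {set {ffun X -> bool}}) : nat :=
  \max_(S : {set X} | shattered C S) #|S|.

Definition is_maximum (C : {set {ffun X -> bool}}) : Prop :=
  #|C| = \sum_(i < (vcdim C).+1) 'C(#|X|, i).

Definition is_maximal (C : {set {ffun X -> bool}}) : Prop :=
  forall c : {ffun X -> bool}, c \notin C -> vcdim C < vcdim (c |: C).
End VC.

Section CPnets.
Variables n m : nat.

Definition outcome := {ffun 'I_n -> 'I_m}.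

Definition is_swap (o o' : outcome) : bool := #|[set i | o i != o' i]| == 1.

(* A complete CP-net is given by parent sets and, for each variable v and
   each outcome o, a strict total order on the domain of v, encoded by a
   permutation p (value a is preferred to b iff p a < p b). The order may only
   depend on the values of the parents (i.e. it is a function of the context). *)
Definition cpnet := ({ffun 'I_n -> {set 'I_n}} * {ffun 'I_n -> {ffun outcome -> {perm 'I_m}}})%type.

Definition Pa (N : cpnet) (v : 'I_n) : {set 'I_n} := N.1 v.
Definition cpt (N : cpnet) (v : 'I_n) (o : outcome) : {perm 'I_m} := N.2 v o.

Definition prefv (N : cpnet) (v : 'I_n) (o : outcome) (a b : 'I_m) : bool :=
  (cpt N v o a < cpt N v o b)%N.

Definition cpt_contextual (N : cpnet) : bool :=
  [forall v : 'I_n, forall o : outcome, forall o' : outcome,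
     [forall u in Pa N v, o u == o' u] ==> (cpt N v o == cpt N v o')].

Definition no_self_parent (N : cpnet) : bool := [forall v : 'I_n, v \notin Pa N v].

Definition nondummy (N : cpnet) : bool :=
  [forall v : 'I_n, forall u in Pa N v, exists o : outcome, exists o' : outcome,
     [forall w : 'I_n, (w != u) ==> (o w == o' w)] && (cpt N v o != cpt N v o')].

Definition parent_edge (N : cpnet) : rel 'I_n := fun u v => u \in Pa N v.

Definition acyclic (N : cpnet) : bool :=
  [forall u : 'I_n, forall v : 'I_n, parent_edge N u v ==> ~~ connect (parent_edge N) v u].

Definition k_bounded (k : nat) (N : cpnet) : bool :=
  [forall v : 'I_n, #|Pa N v| <= k].

Definition valid_cpnet (N : cpnet) : bool :=
  [&& no_self_parent N, cpt_contextual N & nondummy N].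

Definition improving_flip (N : cpnet) : rel outcome := fun o o' =>
  [exists v : 'I_n, [forall w : 'I_n, (w != v) ==> (o w == o' w)] && prefv N v o (o' v) (o v)].

Definition preferred (N : cpnet) (o' o : outcome) : bool :=
  [exists o1 : outcome, improving_flip N o o1 && connect (improving_flip N) o1 o'].

(* X_swap: a set of ordered pairs containing exactly one ordering of each swap *)
Definition swap_orientation (Xs : {set outcome * outcome}) : Prop :=
  (forall x, x \in Xs -> is_swap x.1 x.2) /\
  (forall o o', is_swap o o' -> ((o, o') \in Xs) != ((o', o) \in Xs)).

Definition swap_space (Xs : {set outcome * outcome}) : finType :=
  {x : outcome * outcome | x \in Xs}.

Definition concept_of (Xs : {set outcome * outcome}) (N : cpnet)
  : {ffun swap_space Xs -> bool} :=
  [ffun x : swap_space Xs => preferred N (val x).1 (val x).2].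

Definition C_ac (k : nat) (Xs : {set outcome * outcome})
  : {set {ffun swap_space Xs -> bool}} :=
  [set c | [exists N : cpnet,
     [&& valid_cpnet N, acyclic N, k_bounded k N & c == concept_of Xs N]]].
End CPnets.

(* Main.v *)
Require Import Defs.
From mathcomp Require Import all_boot fingroup perm.
From mathcomp Require Import zify.
Set Implicit Arguments. Unset Strict Implicit. Unset Printing Implicit Defensive.

Section VCfacts.
Variable X : finType.
Implicit Types (C D : {set {ffun X -> bool}}).

Lemma shattered_sub C D S : C \subset D -> shattered C S -> shattered D S.
Proof.
move=> sCD /forallP H; apply/forallP => B; apply/implyP => sB.
have /existsP [c /andP [cC e]] := implyP (H B) sB.
by apply/existsP; exists c; rewrite (subsetP sCD _ cC).
Qed.

Lemma vc_compl C c : (exists c0, c0 \in C) ->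
  (forall c', c' \in C -> [ffun x => ~~ c' x] \in C) ->
  forall S, shattered (c |: C) S -> shattered C S.
Proof.
move=> [c0 c0C] Ccomp S /forallP H; apply/forallP => B; apply/implyP => sB.
have /existsP [c1 /andP [c1C /eqP e1]] := implyP (H B) sB.
case/setU1P: c1C => [c1c|c1C]; last by apply/existsP; exists c1; rewrite c1C e1 eqxx.
have /existsP [c2 /andP [c2C /eqP e2]] := implyP (H (S :\: B)) (subsetDl _ _).
case/setU1P: c2C => [c2c|c2C].
  have SB : S :\: B = B by rewrite -e2 -e1 c1c c2c.
  have B0 : B = set0.
    apply/setP => y; rewrite inE; apply/negbTE/negP => yB.
    by move: (yB); rewrite -{1}SB inE yB.
  have S0 : S = set0.
    apply/setP => y; rewrite inE; apply/negbTE/negP => yS.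
    have : y \in S :\: B by rewrite inE B0 inE yS.
    by rewrite SB B0 inE.
  apply/existsP; exists c0; rewrite c0C B0 S0; apply/eqP/setP => y.
  by rewrite !inE.
apply/existsP; exists [ffun x => ~~ c2 x]; rewrite Ccomp //=.
apply/eqP/setP => y; move/setP: e2 => /(_ y); rewrite !inE ffunE.
case yS: (y \in S) => /=; last by move=> _; apply/esym/negbTE/negP => /(subsetP sB); rewrite yS.
by move=> ->; rewrite andbT negbK.
Qed.

Lemma vcdim_le C D : (forall S, shattered C S -> shattered D S) -> vcdim C <= vcdim D.
Proof.
move=> H; apply/bigmax_leqP => S /H sh.
exact: (@leq_bigmax_cond _ (fun S => shattered D S) (fun S => #|S|) S sh).
Qed.

Lemma sh0_notin D x S : shattered [set d in D | ~~ d x] S -> x \notin S.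
Proof.
move=> /forallP /(_ [set x]) /implyP H; apply/negP => xS.
have := H; rewrite sub1set xS => /(_ isT) /existsP [d /andP [] ].
rewrite inE => /andP [_ ndx] /eqP /setP /(_ x); rewrite !inE xS eqxx /=.
by move=> e; rewrite e in ndx.
Qed.

Lemma sh1_notin D x S : shattered [set d in D | d x] S -> x \notin S.
Proof.
move=> /forallP /(_ set0) /implyP H; apply/negP => xS.
have := H; rewrite sub0set => /(_ isT) /existsP [d /andP [] ].
rewrite inE => /andP [_ dx] /eqP /setP /(_ x); rewrite !inE xS dx.
by [].
Qed.

Lemma sh01 D x S : shattered [set d in D | ~~ d x] S -> shattered [set d in D | d x] S ->
  shattered D (x |: S).
Proof.
move=> /forallP H0 /forallP H1; apply/forallP => B; apply/implyP => sB.
case xB: (x \in B).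
  have sB' : B :\ x \subset S.
    apply/subsetP => y; rewrite !inE => /andP [yx yB].
    by move/subsetP: sB => /(_ y yB); rewrite !inE (negbTE yx).
  have /existsP [d /andP [] ] := implyP (H1 (B :\ x)) sB'.
  rewrite inE => /andP [dD dx] /eqP /setP e.
  apply/existsP; exists d; rewrite dD /=; apply/eqP/setP => y.
  move: (e y); rewrite !inE.
  case: (eqVneq y x) => [->|yx] /=; first by rewrite dx xB.
  by move=> ->.
have sB' : B \subset S.
  apply/subsetP => y yB; move/subsetP: sB => /(_ y yB); rewrite !inE.
  by case: (eqVneq y x) => [e|//]; rewrite -e yB in xB.
have /existsP [d /andP [] ] := implyP (H0 B) sB'.
rewrite inE => /andP [dD dx] /eqP /setP e.
apply/existsP; exists d; rewrite dD /=; apply/eqP/setP => y.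
move: (e y); rewrite !inE.
case: (eqVneq y x) => [->|yx] /=; first by rewrite (negbTE dx) xB.
by move=> ->.
Qed.

Lemma pajor D : #|D| <= #|[set S | shattered D S]|.
Proof.
move: {2}#|D| (leqnn #|D|) => s; elim: s D => [|s IH] D hD.
  by move: hD; rewrite leqn0 => /eqP ->.
case: (leqP #|D| 1) => [D1|D2].
  case: (posnP #|D|) => [-> //|D0].
  have [d dD] : exists d, d \in D by apply/card_gt0P.
  apply: leq_trans D1 _; rewrite card_gt0; apply/set0Pn; exists set0.
  rewrite inE; apply/forallP => B; apply/implyP; rewrite subset0 => /eqP ->.
  by apply/existsP; exists d; rewrite dD; apply/eqP/setP => y; rewrite !inE.
have [d1 [d2 [d1D d2D d12]]] : exists d1 d2, [/\ d1 \in D, d2 \in D & d1 != d2].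
  have [d1 d1D] : exists d, d \in D by apply/card_gt0P; apply: leq_trans D2.
  have : 0 < #|D :\ d1| by move: D2; rewrite (cardsD1 d1 D) d1D.
  case/card_gt0P => d2; rewrite !inE => /andP [d21 d2D].
  by exists d1, d2; rewrite eq_sym.
have [x dx] : exists x, d1 x != d2 x.
  apply/existsP; apply: contraNT d12 => /existsPn H; apply/eqP/ffunP => y.
  exact/eqP/negbNE/H.
set D0 := [set d in D | ~~ d x]; set D1 := [set d in D | d x].
have cardD : #|D1| + #|D0| = #|D|.
  rewrite -(cardsID [set d : {ffun X -> bool} | d x] D).
  have -> : D :&: [set d : {ffun X -> bool} | d x] = D1 by apply/setP => d; rewrite !inE.
  have -> : D :\: [set d : {ffun X -> bool} | d x] = D0 by apply/setP => d; rewrite !inE andbC.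
  by [].
have [p0 p1] : 0 < #|D0| /\ 0 < #|D1|.
  have E2 : d2 x = ~~ d1 x by move: dx; case: (d1 x); case: (d2 x).
  case E1: (d1 x); rewrite E1 /= in E2; split; apply/card_gt0P.
  - by exists d2; rewrite !inE d2D E2.
  - by exists d1; rewrite !inE d1D E1.
  - by exists d1; rewrite !inE d1D E1.
  - by exists d2; rewrite !inE d2D E2.
have IH0 := IH D0 _; have IH1 := IH D1 _.
have L0 : #|D0| <= #|[set S | shattered D0 S]| by apply: IH0; rewrite -ltnS; apply: leq_trans hD; rewrite -cardD -add1n leq_add2r.
have L1 : #|D1| <= #|[set S | shattered D1 S]| by apply: IH1; rewrite -ltnS; apply: leq_trans hD; rewrite -cardD -addn1 leq_add2l.
rewrite -cardD addnC.
apply: (leq_trans (leq_add L0 L1)).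
rewrite -cardsUI.
set A := _ :|: _; set I := _ :&: _.
have xI : forall S, S \in I -> x \notin S.
  by move=> S; rewrite !inE => /andP [/sh0_notin].
have -> : #|I| = #|[set x |: S | S in I]|.
  apply/esym/card_in_imset => S1 S2 /xI h1 /xI h2 e.
  apply/setP => y; move/setP: e => /(_ y); rewrite !inE.
  by case: (eqVneq y x) => [->|]; rewrite ?(negbTE h1) ?(negbTE h2).
rewrite -cardsUI.
have -> : A :&: [set x |: S | S in I] = set0.
  apply/setP => T; rewrite in_set0; apply/negbTE/negP => /setIP [hA /imsetP [S SI eT]].
  have : x \notin T.
    by move: hA; rewrite !inE => /orP [/sh0_notin|/sh1_notin].
  by rewrite eT !inE eqxx.
rewrite cards0 addn0; apply: subset_leq_card; apply/subsetP => T.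
rewrite !inE => /orP [/orP [] h|/imsetP [S SI ->]].
- by apply: shattered_sub h; apply/subsetP => d; rewrite inE => /andP [].
- by apply: shattered_sub h; apply/subsetP => d; rewrite inE => /andP [].
- by move: SI; rewrite !inE => /andP [h0 h1]; apply: sh01 h1.
Qed.
Lemma card_small d : #|[set S : {set X} | #|S| <= d]| = \sum_(i < d.+1) 'C(#|X|, i).
Proof.
elim: d => [|d IH].
  rewrite big_ord_recr big_ord0 /= -card_draws; apply: eq_card => S.
  by rewrite !inE leqn0.
rewrite big_ord_recr /= -IH -card_draws.
have -> : [set S : {set X} | #|S| <= d.+1] =
   [set S : {set X} | #|S| <= d] :|: [set S : {set X} | #|S| == d.+1].
  by apply/setP => S; rewrite !inE leq_eqVlt ltnS orbC.
rewrite cardsU.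
have -> : [set S : {set X} | #|S| <= d] :&: [set S : {set X} | #|S| == d.+1] = set0.
  apply/setP => S; rewrite !inE; apply/negbTE/negP => /andP [h /eqP e].
  by rewrite e ltnn in h.
by rewrite cards0 subn0.
Qed.

Lemma sauer D : #|D| <= \sum_(i < (vcdim D).+1) 'C(#|X|, i).
Proof.
rewrite -card_small; apply: (leq_trans (pajor D)); apply: subset_leq_card.
apply/subsetP => S; rewrite !inE => sh.
exact: (@leq_bigmax_cond _ (fun S => shattered D S) (fun S => #|S|) S sh).
Qed.

Lemma compl_closed_not_max C c : (exists c0, c0 \in C) ->
  (forall c', c' \in C -> [ffun x => ~~ c' x] \in C) -> c \notin C ->
  ~ is_maximal C /\ ~ is_maximum C.
Proof.
move=> ne cc cC.
have e : vcdim (c |: C) = vcdim C.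
  apply/eqP; rewrite eqn_leq; apply/andP; split; apply: vcdim_le => S.
    exact: vc_compl.
  by apply: shattered_sub; apply: subsetUr.
split.
  by move=> /(_ c cC); rewrite e ltnn.
rewrite /is_maximum => h.
have := sauer (c |: C); rewrite e -h cardsU1 cC.
by rewrite add1n ltnn.
Qed.
End VCfacts.

Lemma mono_path (T : eqType) (e : rel T) (f : T -> nat) a p :
  (forall x y, x \in a :: p -> e x y -> f y <= f x) -> path e a p ->
  f (last a p) <= f a /\ forall y, y \in p -> f (last a p) <= f y <= f a.
Proof.
elim: p a => [|b p IH] a H /=; first by split.
case/andP => eab pb.
have fb : f b <= f a by apply: H eab; rewrite inE eqxx.
have [l1 l2] := IH b (fun x y xp => H x y (@mem_behead _ (a :: b :: p) x xp)) pb.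
split; first exact: leq_trans l1 fb.
move=> y; rewrite inE => /orP [/eqP ->|yp]; first by rewrite l1.
have /andP [h1 h2] := l2 y yp.
by rewrite h1 (leq_trans h2 fb).
Qed.

Section CP.
Variables n m : nat.
Implicit Types (N : cpnet n m) (a o p q : outcome n m).

Lemma pref_irr N a : cpt_contextual N -> acyclic N -> ~~ preferred N a a.
Proof.
move=> ctx acy; apply/negP => /existsP [o1 /andP [f1 /connectP [p pth ea]]].
set q := o1 :: p.
have pq : path (improving_flip N) a q by rewrite /= f1 pth.
have lq : last a q = a by rewrite /= -ea.
pose anc := fun v => [set u | connect (parent_edge N) u v].
have key : forall s v, #|anc v| < s -> forall y, y \in q -> y v = a v.
  elim=> [//|s IH] v hv.
  have par : forall u, u \in Pa N v -> forall y, y \in q -> y u = a u.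
    move=> u uv; apply: IH; rewrite -ltnS; apply: leq_trans hv; apply: proper_card.
    apply/properP; split.
      apply/subsetP => w; rewrite !inE => cw; apply: connect_trans cw _.
      by apply: connect1.
    exists v; rewrite !inE ?connect0 //.
    exact: (implyP (forallP (forallP acy u) v) uv).
  have cptc : forall y, y \in a :: q -> cpt N v y = cpt N v a.
    move=> y; rewrite inE => /orP [/eqP -> //|yq].
    apply/eqP; move/forallP: ctx => /(_ v) /forallP /(_ y) /forallP /(_ a) /implyP; apply.
    by apply/forallP => u; apply/implyP => uv; rewrite (par u uv y yq) eqxx.
  pose r := fun y : outcome n m => cpt N v a (y v).
  have step : forall x y, x \in a :: q -> improving_flip N x y -> r y <= r x.
    move=> x y xq /existsP [w /andP [/forallP eqw pw]].
    case: (eqVneq w v) => [wv|wv].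
      by subst w; move: pw; rewrite /prefv (cptc x xq) => /ltnW.
    by have := eqw v; rewrite eq_sym wv /= => /eqP; rewrite /r => <-.
  move=> y yq.
  have [_ h] := mono_path step pq; have /andP [h1 h2] := h y yq.
  rewrite lq in h1.
  have : r y = r a by apply: val_inj; apply/eqP; rewrite eqn_leq h2 h1.
  exact: perm_inj.
have eq1 : o1 = a.
  apply/ffunP => v; apply: (key #|anc v|.+1 v (ltnSn _)); by rewrite inE eqxx.
by move: f1 => /existsP [w /andP [_ pw]]; rewrite /prefv eq1 ltnn in pw.
Qed.


Lemma pref_trans N a b c : preferred N a b -> preferred N b c -> preferred N a c.
Proof.
move=> /existsP [o1 /andP [f1 c1]] /existsP [o2 /andP [f2 c2]].
apply/existsP; exists o2; rewrite f2 /=; apply: connect_trans c2 _.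
exact: connect_trans (connect1 f1) c1.
Qed.

Lemma swap_diff p q : is_swap p q ->
  exists v, p v != q v /\ forall w, w != v -> p w = q w.
Proof.
case/cards1P => v /setP e; exists v; split.
  by have := e v; rewrite !inE eqxx.
move=> w wv; have := e w; rewrite !inE (negbTE wv).
by move/negbT; rewrite negbK => /eqP.
Qed.

Lemma cpt_agree N p q v : valid_cpnet N ->
  (forall w, w != v -> p w = q w) -> cpt N v p = cpt N v q.
Proof.
case/and3P => nsp ctx _ E.
apply/eqP; move/forallP: ctx => /(_ v) /forallP /(_ p) /forallP /(_ q) /implyP; apply.
apply/forallP => u; apply/implyP => uv; rewrite E //.
by apply: contraTneq uv => ->; exact: (forallP nsp v).
Qed.

Lemma flip_of N p q v : (forall w, w != v -> p w = q w) ->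
  prefv N v p (q v) (p v) -> improving_flip N p q.
Proof.
move=> E pf; apply/existsP; exists v; rewrite pf andbT.
by apply/forallP => w; apply/implyP => wv; rewrite (E w wv).
Qed.

Lemma prefv_swap N o v (a b : 'I_m) : a != b -> prefv N v o b a = ~~ prefv N v o a b.
Proof.
move=> ab; rewrite /prefv ltnNge leq_eqVlt.
have -> : (val (cpt N v o a) == val (cpt N v o b)) = false.
  by apply/negbTE; apply: contra ab => /eqP /val_inj /perm_inj ->.
by [].
Qed.

Lemma pref_swap N p q v : valid_cpnet N -> acyclic N -> p v != q v ->
  (forall w, w != v -> p w = q w) -> preferred N p q = prefv N v q (p v) (q v).
Proof.
move=> hv acy pqv E.
have E' : forall w, w != v -> q w = p w by move=> w /E ->.
case P: (prefv N v q (p v) (q v)).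
  by apply/existsP; exists p; rewrite (flip_of E' P) connect0.
apply/negbTE/negP => hp.
have fpq : improving_flip N p q.
  apply: (flip_of E); rewrite /prefv (cpt_agree hv E) -/(prefv N v q (q v) (p v)).
  by rewrite prefv_swap ?P // eq_sym.
have hq : preferred N q p by apply/existsP; exists q; rewrite fpq connect0.
case/and3P: hv => _ ctx _.
by have := pref_irr p ctx acy; rewrite (pref_trans hp hq).
Qed.

Lemma pref_complete N p q : valid_cpnet N -> acyclic N -> is_swap p q ->
  preferred N p q || preferred N q p.
Proof.
move=> hv acy /swap_diff [v [pqv E]].
have E' : forall w, w != v -> q w = p w by move=> w /E ->.
rewrite (pref_swap hv acy pqv E) (pref_swap hv acy _ E'); last by rewrite eq_sym.
have -> : prefv N v q (p v) (q v) = prefv N v p (p v) (q v) by rewrite /prefv (cpt_agree hv E').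
by rewrite (prefv_swap N p v pqv) orbN.
Qed.


Definition revp : {perm 'I_m} := perm (@rev_ord_inj m).
Definition compl_net N : cpnet n m := (N.1, [ffun v => [ffun o => (N.2 v o * revp)%g]]).

Lemma cpt_compl N v o : cpt (compl_net N) v o = (cpt N v o * revp)%g.
Proof. by rewrite /cpt /= !ffunE. Qed.

Lemma prefv_compl N v o (a b : 'I_m) : prefv (compl_net N) v o a b = prefv N v o b a.
Proof.
rewrite /prefv !cpt_compl !permM !permE /=.
have := ltn_ord (cpt N v o a); have := ltn_ord (cpt N v o b); lia.
Qed.

Lemma valid_compl N : valid_cpnet N -> valid_cpnet (compl_net N).
Proof.
case/and3P => nsp ctx nd; apply/and3P; split => //.
  apply/forallP => v; apply/forallP => o; apply/forallP => o'; apply/implyP => h.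
  by rewrite !cpt_compl (eqP (implyP (forallP (forallP (forallP ctx v) o) o') h)).
apply/forallP => v; apply/forallP => u; apply/implyP => uv.
have /existsP [o /existsP [o' /andP [ag ne]]] := implyP (forallP (forallP nd v) u) uv.
apply/existsP; exists o; apply/existsP; exists o'; rewrite ag /= !cpt_compl.
apply: contra ne => /eqP e; apply/eqP.
by have := congr1 (fun s => (s * revp^-1)%g) e; rewrite /= -!mulgA mulgV !mulg1.
Qed.

Lemma acyclic_compl N : acyclic N -> acyclic (compl_net N).
Proof. by []. Qed.

Lemma kb_compl k N : k_bounded k N -> k_bounded k (compl_net N).
Proof. by []. Qed.

Lemma pref_compl N p q : valid_cpnet N -> acyclic N -> is_swap p q ->
  preferred (compl_net N) p q = ~~ preferred N p q.
Proof.
move=> hv acy /swap_diff [v [pqv E]].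
rewrite (pref_swap hv acy pqv E) (pref_swap (valid_compl hv) (acyclic_compl acy) pqv E).
by rewrite prefv_compl prefv_swap.
Qed.

Definition flat_net : cpnet n m := ([ffun => set0], [ffun v => [ffun o => 1%g]]).

Lemma flat_in k (Xs : {set outcome n m * outcome n m}) : concept_of Xs flat_net \in C_ac k Xs.
Proof.
rewrite inE; apply/existsP; exists flat_net; rewrite eqxx andbT.
apply/and3P; split.
- apply/and3P; split.
  + by apply/forallP => v; rewrite /Pa ffunE inE.
  + by apply/forallP => v; apply/forallP => o; apply/forallP => o'; rewrite /cpt !ffunE eqxx implybT.
  + by apply/forallP => v; apply/forallP => u; rewrite /Pa ffunE inE.
- by apply/forallP => u; apply/forallP => v; rewrite /parent_edge /Pa ffunE inE.
- by apply/forallP => v; rewrite /Pa ffunE cards0.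
Qed.

Lemma compl_in k (Xs : {set outcome n m * outcome n m}) c : swap_orientation Xs -> c \in C_ac k Xs ->
  [ffun x => ~~ c x] \in C_ac k Xs.
Proof.
move=> [so _]; rewrite !inE => /existsP [N /and4P [hv acy kb /eqP ->]].
apply/existsP; exists (compl_net N).
rewrite valid_compl // acyclic_compl // kb_compl //=; apply/eqP/ffunP => x.
rewrite !ffunE pref_compl //; exact: so (valP x).
Qed.

Lemma forced (Xs : {set outcome n m * outcome n m}) (F : {set outcome n m * outcome n m}) N p q :
  swap_orientation Xs -> valid_cpnet N -> acyclic N ->
  [ffun x : swap_space Xs => val x \in F] = concept_of Xs N ->
  is_swap p q -> (p, q) \in F -> (q, p) \notin F -> preferred N p q.
Proof.
move=> [_ so] hv acy E sw pqF qpF.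
have := so p q sw; case pq: ((p, q) \in Xs) => /= h.
  move/ffunP: E => /(_ (Sub (p, q) pq : swap_space Xs)).
  by rewrite !ffunE /= pqF => <-.
have qp : (q, p) \in Xs by move: h; case: ((q, p) \in Xs).
move/ffunP: E => /(_ (Sub (q, p) qp : swap_space Xs)).
rewrite !ffunE /= (negbTE qpF) => e.
by have := pref_complete hv acy sw; rewrite -e orbF.
Qed.

End CP.
Definition goodF n m (F : {set outcome n m * outcome n m}) : Prop :=
  (forall p q, (p, q) \in F -> is_swap p q /\ (q, p) \notin F) /\
  (forall N : cpnet n m, (forall p q, (p, q) \in F -> preferred N p q) ->
      exists a, preferred N a a).

Lemma pref_trans' n m (N : cpnet n m) a b c : preferred N a b -> preferred N b c -> preferred N a c.
Proof.
move=> /existsP [o1 /andP [f1 c1]] /existsP [o2 /andP [f2 c2]].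
apply/existsP; exists o2; rewrite f2 /=; apply: connect_trans c2 _.
exact: connect_trans (connect1 f1) c1.
Qed.

Section C3.
Variables n' m' : nat.
Local Notation n := n'.+1.
Local Notation m := m'.+3.
Definition o3 (a : 'I_m) : outcome n m := [ffun i => if i == ord0 then a else ord0].
Lemma o3_swap a b : a != b -> is_swap (o3 a) (o3 b).
Proof.
move=> ab; apply/cards1P; exists ord0; apply/setP => i; rewrite !inE !ffunE.
by case: (i == ord0) => //=; rewrite eqxx.
Qed.
Lemma o3_inj a b : (o3 a == o3 b) = (a == b).
Proof.
apply/eqP/eqP => [/ffunP /(_ ord0)|->] //; by rewrite !ffunE eqxx.
Qed.
Definition v0 : 'I_m := @Ordinal m 0 isT.
Definition v1 : 'I_m := @Ordinal m 1 isT.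
Definition v2 : 'I_m := @Ordinal m 2 isT.

Lemma cycle3 : exists F, @goodF n m F.
Proof.
exists [set (o3 v1, o3 v0); (o3 v2, o3 v1); (o3 v0, o3 v2)]; split.
  move=> p q; rewrite !inE => /orP [/orP [/eqP [-> ->]|/eqP [-> ->]]|/eqP [-> ->]];
  (split; [apply: o3_swap => // | by rewrite ?inE !xpair_eqE !o3_inj]).
move=> N H; exists (o3 v0).
have h1 : preferred N (o3 v1) (o3 v0) by apply: H; rewrite !inE eqxx.
have h2 : preferred N (o3 v2) (o3 v1) by apply: H; rewrite !inE eqxx !orbT.
have h3 : preferred N (o3 v0) (o3 v2) by apply: H; rewrite !inE eqxx !orbT.
exact: pref_trans' h3 (pref_trans' h2 h1).
Qed.
End C3.

Section C4.
Variable n' : nat.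
Local Notation n := n'.+2.
Local Notation m := 2.
Definition w1 : 'I_n := @Ordinal n 1 isT.
Definition b0 : 'I_2 := @Ordinal 2 0 isT.
Definition b1 : 'I_2 := @Ordinal 2 1 isT.
Definition o4 (a b : 'I_m) : outcome n m :=
  [ffun i => if i == ord0 then a else if i == w1 then b else ord0].
Lemma o4_swap0 a a' b : a != a' -> is_swap (o4 a b) (o4 a' b).
Proof.
move=> ab; apply/cards1P; exists ord0; apply/setP => i; rewrite !inE !ffunE.
case: (i == ord0) => //=; by case: (i == w1); rewrite eqxx.
Qed.
Lemma o4_swap1 a b b' : b != b' -> is_swap (o4 a b) (o4 a b').
Proof.
move=> bb; apply/cards1P; exists w1; apply/setP => i; rewrite !inE !ffunE.
case: (eqVneq i ord0) => [->|_] //=; first by rewrite eqxx.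
by case: (i == w1); rewrite ?eqxx.
Qed.
Lemma o4_inj a b a' b' : (o4 a b == o4 a' b') = (a == a') && (b == b').
Proof.
apply/eqP/andP => [/ffunP h|[/eqP -> /eqP ->] //]; split.
  by have := h ord0; rewrite !ffunE eqxx => ->.
by have := h w1; rewrite !ffunE /= => ->.
Qed.

Lemma cycle4 : exists F, @goodF n m F.
Proof.
exists [set (o4 b1 b0, o4 b0 b0); (o4 b1 b1, o4 b1 b0); (o4 b0 b1, o4 b1 b1); (o4 b0 b0, o4 b0 b1)]; split.
  move=> p q; rewrite !inE => /orP [/orP [/orP [/eqP [-> ->]|/eqP [-> ->]]|/eqP [-> ->]]|/eqP [-> ->]];
  (split; [ (apply: o4_swap0 + apply: o4_swap1) => // | by rewrite ?inE !xpair_eqE !o4_inj]).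
move=> N H; exists (o4 b0 b0).
have h1 : preferred N (o4 b1 b0) (o4 b0 b0) by apply: H; rewrite !inE eqxx.
have h2 : preferred N (o4 b1 b1) (o4 b1 b0) by apply: H; rewrite !inE eqxx !orbT.
have h3 : preferred N (o4 b0 b1) (o4 b1 b1) by apply: H; rewrite !inE eqxx !orbT.
have h4 : preferred N (o4 b0 b0) (o4 b0 b1) by apply: H; rewrite !inE eqxx !orbT.
exact: pref_trans' h4 (pref_trans' h3 (pref_trans' h2 h1)).
Qed.
End C4.

Theorem proposition4 (n m k : nat) :
  1 <= n -> 2 <= m -> k <= n - 1 -> (m, k) != (2, 0) ->
  forall Xs : {set outcome n m * outcome n m},
    swap_orientation Xs ->
    ~ is_maximal (C_ac k Xs) /\ ~ is_maximum (C_ac k Xs).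
Proof.
move=> n1 m2 kn mk.
have [F [HF1 HF2]] : exists F, @goodF n m F.
  case: m m2 mk => [|[|[|m']]] // _ mk.
    case: n n1 kn => [|[|n']] // _ kn; last exact: cycle4.
    by move: kn mk; rewrite leqn0 => /eqP ->.
  by case: n n1 kn => [|n'] // _ _; exact: cycle3.
move=> Xs so.
apply: (compl_closed_not_max (c := [ffun x : swap_space Xs => val x \in F])).
- by eexists; exact: flat_in.
- by move=> c'; apply: compl_in.
apply/negP; rewrite inE => /existsP [N /and4P [hv acy _ /eqP E]].
have [a] := HF2 N (fun p q pq => forced so hv acy E (HF1 p q pq).1 pq (HF1 p q pq).2).
apply/negP; case/and3P: hv => _ ctx _; exact: pref_irr.
Qed.
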